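(* Let $N\ge1$, let $\phi:H_0(S_N)\to M_N$ be the quotient morphism sending $\pi_i\mapsto \pi_i$, where $M_N$ is the quotient of $H_0(S_N)$ by the relations $\pi_i\pi_{i+1}\pi_i=\pi_i\pi_{i+1}$ ($1\le i\le N-2$), let $\Psi$ be the automorphism of $H_0(S_N)$ with $\Psi(\pi_i)=\pi_{N-i}$, and define $\omega(x)=(\phi(x),\phi(\Psi(x)))$ for $x\in H_0(S_N)$. Then every nonempty fiber $\{w\in S_N:\ \omega(\pi_w)=c\}$ of $\omega$ contains a unique $[4321]$-avoiding permutation.
   Context: $S_N$ is generated by simple transpositions $s_1,\dots,s_{N-1}$; permutations are in one-line notation and composed as functions. $H_0(S_N)$ is generated by $\pi_1,\dots,\pi_{N-1}$ with relations $\pi_i^2=\pi_i$, $\pi_i\pi_j=\pi_j\pi_i$ for $|i-j|\ge2$, $\pi_i\pi_{i+1}\pi_i=\pi_{i+1}\pi_i\pi_{i+1}$; $\pi_w:=\pi_{i_1}\cdots\pi_{i_k}$ for any reduced word $w=s_{i_1}\cdots s_{i_k}$, a bijection $S_N\to H_0(S_N)$. A permutation avoids $[4321]$ if its one-line notation has no decreasing subsequence of length $4$. ($M_N$ is isomorphic to the monoid $\operatorname{NDPF}_N$ of order-preserving regressive maps of $\{1,\dots,N\}$.) *)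

(* Defs.v *)
From mathcomp Require Import all_boot all_fingroup.
Set Implicit Arguments. Unset Strict Implicit. Unset Printing Implicit Defensive.

(* Action of the simple transposition s_i (1 <= i <= N-1) on positions,
   encoded 0-based: s_i swaps the values i-1 and i (i.e. 1-based i and i+1). *)
Definition sw (i x : nat) : nat :=
  if x == i.-1 then i else if x == i then i.-1 else x.

Fixpoint word_fun (w : seq nat) (x : nat) : nat :=
  if w is i :: r then sw i (word_fun r x) else x.

Definition valid_word (N : nat) (w : seq nat) : bool :=
  all (fun i => (0 < i) && (i < N)) w.

(* Coxeter length = number of inversions of the one-line notation. *)
Definition ninv (N : nat) (p : 'S_N) : nat :=
  #|[set ab : 'I_N * 'I_N | (ab.1 < ab.2) && (p ab.2 < p ab.1)]|.

Definition reduced_word (N : nat) (rw : seq nat) (p : 'S_N) : Prop :=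
  [/\ valid_word N rw,
      forall x : 'I_N, val (p x) = word_fun rw (val x)
    & size rw = ninv p].

Inductive MN_basic (N : nat) : seq nat -> seq nat -> Prop :=
| MN_idem i : 0 < i -> i < N -> MN_basic N [:: i; i] [:: i]
| MN_comm i j : 0 < i -> i < N -> 0 < j -> j < N -> (i + 2 <= j) || (j + 2 <= i) ->
    MN_basic N [:: i; j] [:: j; i]
| MN_braid i : 0 < i -> i.+1 < N -> MN_basic N [:: i; i.+1; i] [:: i.+1; i; i.+1]
| MN_extra i : 0 < i -> i.+1 < N -> MN_basic N [:: i; i.+1; i] [:: i; i.+1].

Inductive MN_eq (N : nat) : seq nat -> seq nat -> Prop :=
| MN_step u v l r : MN_basic N l r -> MN_eq N (u ++ l ++ v) (u ++ r ++ v)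
| MN_refl u : MN_eq N u u
| MN_sym u v : MN_eq N u v -> MN_eq N v u
| MN_trans u v t : MN_eq N u v -> MN_eq N v t -> MN_eq N u t.

Definition Psi_word (N : nat) (w : seq nat) : seq nat := map (fun i => N - i) w.

(* omega(pi_p) = omega(pi_q): phi(pi_p) = phi(pi_q) and phi(Psi pi_p) = phi(Psi pi_q),
   where pi_p is represented by any reduced word of p. *)
Definition omega_eq (N : nat) (p q : 'S_N) : Prop :=
  forall rp rq, reduced_word rp p -> reduced_word rq q ->
    MN_eq N rp rq /\ MN_eq N (Psi_word N rp) (Psi_word N rq).

Definition avoids4321 (N : nat) (p : 'S_N) : bool :=
  [forall a : 'I_N, forall b : 'I_N, forall c : 'I_N, forall d : 'I_N,
     ~~ [&& a < b, b < c, c < d, p b < p a, p c < p b & p d < p c]].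

(* Main.v *)
Require Import Defs.
From mathcomp Require Import all_boot all_fingroup.
From mathcomp Require Import zify.
Set Implicit Arguments. Unset Strict Implicit. Unset Printing Implicit Defensive.

Lemma MN_cat N u v x y : MN_eq N u v -> MN_eq N (x ++ u ++ y) (x ++ v ++ y).
Proof.
elim=> [u' v' l r H|u'|u' v' _ IH|u' v' t _ IH1 _ IH2].
- have -> : x ++ (u' ++ l ++ v') ++ y = (x ++ u') ++ l ++ (v' ++ y) by rewrite !catA.
  have -> : x ++ (u' ++ r ++ v') ++ y = (x ++ u') ++ r ++ (v' ++ y) by rewrite !catA.
  exact: MN_step.
- exact: MN_refl.
- exact: MN_sym.
- exact: MN_trans IH2.
Qed.

Lemma MN_catl N u v x : MN_eq N u v -> MN_eq N (x ++ u) (x ++ v).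
Proof. by move=> H; have := MN_cat x [::] H; rewrite !cats0. Qed.

Lemma MN_catr N u v y : MN_eq N u v -> MN_eq N (u ++ y) (v ++ y).
Proof. by move=> H; have := MN_cat [::] y H. Qed.

Lemma MN_b N l r : MN_basic N l r -> MN_eq N l r.
Proof. by move=> H; have := MN_step [::] [::] H; rewrite /= !cats0. Qed.

Definition g (i y : nat) := if y == i then i.-1 else y.
Definition ev (w : seq nat) (x : nat) := foldr g x w.

Lemma ev_cat u v x : ev (u ++ v) x = ev u (ev v x).
Proof. by rewrite /ev foldr_cat. Qed.

Lemma basic_ev N l r : MN_basic N l r -> forall x, ev l x = ev r x.
Proof.
case=> [i _ _|i j _ _ _ _ H|i _ _|i _ _] x; rewrite /ev /= /g;
  repeat case: eqP; lia.
Qed.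

Lemma MN_ev N u v : MN_eq N u v -> forall x, ev u x = ev v x.
Proof.
elim=> [u' v' l r H|u'|u' v' _ IH|u' v' t _ IH1 _ IH2] x //.
- by rewrite !ev_cat (basic_ev H).
- by rewrite IH1.
Qed.

Lemma ev_le w x : ev w x <= x.
Proof. elim: w => //= i w IH; rewrite /g; case: eqP; lia. Qed.

Lemma ev_mono w x y : x <= y -> ev w x <= ev w y.
Proof.
elim: w => //= i w IH H; have := IH H; rewrite /g.
move: (ev w x) (ev w y) => a b; repeat case: eqP; lia.
Qed.

Definition R (a x : nat) := iota a.+1 (x - a).
Definition canon N (f : nat -> nat) := flatten [seq R (f x) x | x <- rev (iota 0 N)].

Lemma MN_comm_seq N j t : 0 < j < N ->
  all (fun k => (0 < k < N) && ((k + 2 <= j) || (j + 2 <= k))) t ->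
  MN_eq N (t ++ [:: j]) (j :: t).
Proof.
move=> hj; elim: t => [|k t IH] /=; first by move=> _; exact: MN_refl.
case/andP=> /andP[hk hkj] ht.
apply: MN_trans (MN_catl [:: k] (IH ht)) _.
have := MN_catr t (MN_b (@MN_comm N k j _ _ _ _ hkj)).
apply; lia.
Qed.

Lemma LA N a n j : a < j <= a + n -> a + n < N ->
  MN_eq N (j :: iota a.+1 n) (iota a.+1 n).
Proof.
elim: n a => [|n IH] a hj hN; first lia.
rewrite [iota _ _]/=.
case: (ltngtP j a.+2) => hj2.
- have -> : j = a.+1 by lia.
  have := MN_catr (iota a.+2 n) (MN_b (@MN_idem N a.+1 _ _)). apply; lia.
- apply: MN_trans (_ : MN_eq N (a.+1 :: j :: iota a.+2 n) _).
    have := MN_catr (iota a.+2 n) (MN_b (@MN_comm N j a.+1 _ _ _ _ _)). apply; lia.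
  have := MN_catl [:: a.+1] (IH a.+1 _ _). apply; lia.
- subst j. case: n IH hj hN => [|n] IH hj hN; first lia.
  rewrite [iota _ _]/=.
  apply: MN_trans (_ : MN_eq N ([:: a.+1; a.+2; a.+1] ++ iota a.+3 n) _).
    have h : MN_eq N [:: a.+2; a.+1; a.+2] [:: a.+1; a.+2; a.+1].
      apply: MN_sym; apply: MN_b; apply: MN_braid; lia.
    exact: (MN_catr (iota a.+3 n) h).
  have := MN_catr (iota a.+3 n) (MN_b (@MN_extra N a.+1 _ _)). apply; lia.
Qed.

Lemma RA N a n j : a < j <= a + n -> a + n < N ->
  MN_eq N (iota a.+1 n ++ [:: j]) (iota a.+1 n).
Proof.
elim: n a => [|n IH] a hj hN; first lia.
rewrite [iota _ _]/=.
case: (ltngtP j a.+1) => hj2; first lia.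
- have := MN_catl [:: a.+1] (IH a.+1 _ _). apply; lia.
- subst j. case: n IH hj hN => [|n] IH hj hN.
    have := MN_b (@MN_idem N a.+1 _ _). apply; lia.
  rewrite [iota _ _]/=.
  have h1 : MN_eq N (iota a.+3 n ++ [:: a.+1]) (a.+1 :: iota a.+3 n).
    apply: MN_comm_seq; first lia.
    apply/allP => k; rewrite mem_iota; lia.
  apply: MN_trans (MN_catl [:: a.+1; a.+2] h1) _.
  have := MN_catr (iota a.+3 n) (MN_b (@MN_extra N a.+1 _ _)). apply; lia.
Qed.

Lemma LAs N a n t : a + n < N -> all (fun j => a < j <= a + n) t ->
  MN_eq N (t ++ iota a.+1 n) (iota a.+1 n).
Proof.
move=> hN; elim: t => [|j t IH] /=; first by move=> _; exact: MN_refl.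
case/andP=> hj ht.
apply: MN_trans (MN_catl [:: j] (IH ht)) _.
exact: LA.
Qed.

Lemma RAs N a n t : a + n < N -> all (fun j => a < j <= a + n) t ->
  MN_eq N (iota a.+1 n ++ t) (iota a.+1 n).
Proof.
move=> hN; elim: t => [|j t IH] /=; first by rewrite cats0 => _; exact: MN_refl.
case/andP=> hj ht.
rewrite -cat1s catA.
apply: MN_trans (MN_catr t (RA hj hN)) _.
exact: IH.
Qed.

Lemma core N a b i : a <= b <= i -> a <= i.-1 -> 0 < i < N ->
  MN_eq N (R b i ++ R a i.-1 ++ [:: i]) (R a i ++ R a i.-1).
Proof.
move=> hab hai hi.
have e : R a i.-1 ++ [:: i] = R a i.
  rewrite /R; have -> : i - a = (i.-1 - a) + 1 by lia.
  rewrite iotaD /=; congr (_ ++ [:: _]); lia.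
rewrite e.
apply: MN_trans (_ : MN_eq N (R a i) _).
  rewrite /R; apply: LAs; first lia.
  apply/allP=> k; rewrite mem_iota; lia.
apply: MN_sym; rewrite /R; apply: RAs; first lia.
apply/allP=> k; rewrite mem_iota; lia.
Qed.

Lemma split_iota N i : 0 < i < N ->
  rev (iota 0 N) = rev (iota i.+1 (N - i.+1)) ++ [:: i; i.-1] ++ rev (iota 0 i.-1).
Proof.
move=> hi.
have -> : N = i.-1 + (2 + (N - i.+1)) by lia.
rewrite iotaD iotaD /= !rev_cat /=.
have -> : i.-1.+1 = i by lia.
have -> : i.-1 + (2 + (N - i.+1)) - i.+1 = N - i.+1 by lia.
rewrite !rev_cons -!cats1 -!catA add0n.
by have -> : i.-1 + 2 = i.+1 by lia.
Qed.

Lemma key N (f : nat -> nat) i :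
  (forall x y, x <= y -> f x <= f y) -> (forall x, f x <= x) -> 0 < i < N ->
  MN_eq N (canon N f ++ [:: i]) (canon N (fun x => f (g i x))).
Proof.
move=> hm hr hi.
rewrite /canon (split_iota hi) !map_cat !flatten_cat /= !cats0.
have eH : [seq R (f (g i x)) x | x <- rev (iota i.+1 (N - i.+1))] =
          [seq R (f x) x | x <- rev (iota i.+1 (N - i.+1))].
  apply/eq_in_map => x; rewrite mem_rev mem_iota => hx; rewrite /g ifN //; apply/eqP; lia.
have eT : [seq R (f (g i x)) x | x <- rev (iota 0 i.-1)] =
          [seq R (f x) x | x <- rev (iota 0 i.-1)].
  apply/eq_in_map => x; rewrite mem_rev mem_iota => hx; rewrite /g ifN //; apply/eqP; lia.
rewrite eH eT {1}/g eqxx /g ifN; last by apply/eqP; lia.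
set H := flatten _; set T := flatten _.
rewrite -!catA; apply: MN_catl.
have hT : MN_eq N (T ++ [:: i]) (i :: T).
  apply: MN_comm_seq => //; apply/allP => k.
  rewrite /T => /flattenP [s /mapP [x]]; rewrite mem_rev mem_iota => hx -> {s}.
  rewrite /R mem_iota => hk; have := hr x; lia.
rewrite catA; apply: MN_trans (MN_catl _ hT) _.
rewrite -catA -cat1s catA catA.
rewrite (catA (R (f i.-1) i)).
apply: MN_catr.
rewrite -catA; apply: (@core N (f i.-1) (f i) i); [have := hm i.-1 i; have := hr i; have := hr i.-1; lia | have := hr i.-1; lia | lia].
Qed.

Lemma canon_ext N f h : (forall x, x < N -> f x = h x) -> canon N f = canon N h.
Proof.
move=> e; rewrite /canon; congr flatten; apply/eq_in_map => x.
by rewrite mem_rev mem_iota => hx; rewrite e //; lia.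
Qed.

Lemma canon_id N : canon N id = [::].
Proof.
rewrite /canon; elim: (rev _) => //= x s ->; by rewrite /R subnn.
Qed.

Lemma to_canon N w : all (fun i => 0 < i < N) w -> MN_eq N w (canon N (ev w)).
Proof.
elim/last_ind: w => [|w i IH]; first by rewrite (@canon_ext N _ id) ?canon_id //; constructor.
rewrite all_rcons => /andP [hi hw].
rewrite -cats1; apply: MN_trans (MN_catr _ (IH hw)) _.
rewrite (@canon_ext N (ev (w ++ [:: i])) (fun x => ev w (g i x))); last by move=> x _; rewrite ev_cat.
apply: key => //; [exact: ev_mono | exact: ev_le].
Qed.

Lemma faithfulMN N u v : all (fun i => 0 < i < N) u -> all (fun i => 0 < i < N) v ->
  (forall x, x < N -> ev u x = ev v x) -> MN_eq N u v.
Proof.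
move=> hu hv e; apply: MN_trans (to_canon hu) _.
rewrite (canon_ext e); apply: MN_sym; exact: to_canon.
Qed.

Fixpoint smin (f : nat -> nat) x n := if n is n'.+1 then minn (f x) (smin f x.+1 n') else f x.
Definition SM N f x := smin f x (N - x.+1).

Lemma smin_le f n x k : x <= k <= x + n -> smin f x n <= f k.
Proof.
elim: n x => [|n IH] x hk /=; first by have -> : k = x by lia.
case: (ltngtP x k) => h; [|lia|].
- have := IH x.+1 ltac:(lia); lia.
- subst; lia.
Qed.

Lemma smin_att f n x : exists k, x <= k <= x + n /\ smin f x n = f k.
Proof.
elim: n x => [|n IH] x /=; first by exists x; split => //; lia.
have [k [hk e]] := IH x.+1.
case: (leqP (f x) (smin f x.+1 n)) => h.
- exists x; split; [lia|]; lia.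
- exists k; split; [lia|]; lia.
Qed.

Lemma smin_ge f n x m : (forall k, x <= k <= x + n -> m <= f k) -> m <= smin f x n.
Proof.
elim: n x => [|n IH] x hk /=; first by apply: hk; lia.
have := hk x ltac:(lia); have := IH x.+1 (fun k hk' => hk k ltac:(lia)); lia.
Qed.

Lemma SM_le N f x k : x <= k < N -> SM N f x <= f k.
Proof. move=> h; apply: smin_le; lia. Qed.

Lemma SM_att N f x : x < N -> exists k, x <= k < N /\ SM N f x = f k.
Proof. move=> h; have [k [hk e]] := smin_att f (N - x.+1) x; exists k; split => //; lia. Qed.

Lemma SM_ge N f x m : x < N -> (forall k, x <= k < N -> m <= f k) -> m <= SM N f x.
Proof. move=> h hk; apply: smin_ge => k hk'; apply: hk; lia. Qed.

Lemma SM_char N f x k0 m : x <= k0 < N -> f k0 = m ->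
  (forall k, x <= k < N -> m <= f k) -> SM N f x = m.
Proof.
move=> hk0 e hk; apply/eqP; rewrite eqn_leq; apply/andP; split.
- by rewrite -e; apply: SM_le.
- apply: SM_ge => //; lia.
Qed.

Lemma SM_ext N f h x : (forall k, k < N -> f k = h k) -> x < N -> SM N f x = SM N h x.
Proof.
move=> e hx; have [k [hk ek]] := SM_att h hx.
apply: (SM_char (k0 := k)) => //; first by rewrite e ?ek //; lia.
by move=> k' hk'; rewrite e; [apply: SM_le|lia].
Qed.

Definition bij N (f h : nat -> nat) :=
  [/\ forall x, x < N -> f x < N, forall x, x < N -> h x < N,
      forall x, x < N -> h (f x) = x & forall x, x < N -> f (h x) = x].

Definition invn N (f : nat -> nat) :=
  #|[set ab : 'I_N * 'I_N | (ab.1 < ab.2) && (f ab.2 < f ab.1)]|.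

Lemma invn_ext N f h : (forall x, x < N -> f x = h x) -> invn N f = invn N h.
Proof.
move=> e; rewrite /invn; apply: eq_card => [[a b]]; rewrite !inE /=.
by rewrite !e ?ltn_ord.
Qed.

Lemma invn_id N : invn N (fun x => x) = 0.
Proof.
rewrite /invn; apply/eqP; rewrite cards_eq0; apply/eqP/setP => [[a b]].
rewrite !inE /=; apply/negbTE; apply/negP => /andP [h1 h2]; lia.
Qed.

Lemma invn_pair N (F G : nat -> nat) (pr : 'I_N * 'I_N) :
  (forall ab : 'I_N * 'I_N, ab != pr ->
     ((ab.1 < ab.2) && (F ab.2 < F ab.1)) = ((ab.1 < ab.2) && (G ab.2 < G ab.1))) ->
  invn N F + ((pr.1 < pr.2) && (G pr.2 < G pr.1)) =
  invn N G + ((pr.1 < pr.2) && (F pr.2 < F pr.1)).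
Proof.
move=> H; rewrite /invn.
rewrite (cardsD1 pr [set _ | _]) (cardsD1 pr [set ab : 'I_N * 'I_N | _ && (G _ < G _)]).
have -> : [set ab : 'I_N * 'I_N | (ab.1 < ab.2) && (F ab.2 < F ab.1)] :\ pr =
          [set ab : 'I_N * 'I_N | (ab.1 < ab.2) && (G ab.2 < G ab.1)] :\ pr.
  apply/setP => ab; rewrite !inE; case: eqP => [//|ne] /=.
  by apply: H; apply/eqP.
rewrite !inE; lia.
Qed.

Lemma sw_cmp i u v : 0 < i -> u <> v -> ~ (u = i.-1 /\ v = i) -> ~ (u = i /\ v = i.-1) ->
  (sw i u < sw i v) = (u < v).
Proof.
move=> hi huv h1 h2; rewrite /sw.
repeat case: eqP; move=> *; apply/idP/idP; lia.
Qed.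

Lemma invn_pair' N (F G : nat -> nat) (pr : 'I_N * 'I_N) (b1 b2 : bool) :
  ((pr.1 < pr.2) && (G pr.2 < G pr.1)) = b1 ->
  ((pr.1 < pr.2) && (F pr.2 < F pr.1)) = b2 ->
  (forall ab : 'I_N * 'I_N, ab != pr ->
     ((ab.1 < ab.2) && (F ab.2 < F ab.1)) = ((ab.1 < ab.2) && (G ab.2 < G ab.1))) ->
  invn N F + b1 = invn N G + b2.
Proof. by move=> <- <-; apply: invn_pair. Qed.

Lemma sw_i i : 0 < i -> sw i i = i.-1.
Proof. by move=> h; rewrite /sw eqxx ifN //; apply/eqP; lia. Qed.
Lemma sw_im1 i : sw i i.-1 = i.
Proof. by rewrite /sw eqxx. Qed.

Lemma step N f h i : bij N f h -> 0 < i < N ->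
  invn N (fun x => sw i (f x)) + (h i < h i.-1) = invn N f + (h i.-1 < h i).
Proof.
case=> hf hh hhf hfh hi.
have hp : h i.-1 < N by apply: hh; lia.
have hq : h i < N by apply: hh; lia.
have fp : f (h i.-1) = i.-1 by apply: hfh; lia.
have fq : f (h i) = i by apply: hfh; lia.
have offp : forall a b : 'I_N, a < b -> ~ (f a = i.-1 /\ f b = i) -> ~ (f a = i /\ f b = i.-1) ->
    (sw i (f b) < sw i (f a)) = (f b < f a).
  move=> a b hab h1 h2; apply: sw_cmp; [lia| |by case=> ??; apply: h2|by case=> ??; apply: h1].
  move=> e; have := hhf b (ltn_ord b); have := hhf a (ltn_ord a); rewrite e; lia.
case: (ltngtP (h i.-1) (h i)) => hpq.
-   apply: (invn_pair' (pr := (Ordinal hp, Ordinal hq))) => /=.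
  + rewrite fp fq hpq /=; apply/negbTE; lia.
  + rewrite fp fq sw_i ?sw_im1 ?hpq /=; lia.
  move=> [a b] /= ne; case: ltnP => //= hab.
  apply: offp => //.
  + case=> e1 e2; apply/negP: ne; rewrite negbK; apply/eqP; congr pair; apply: val_inj => /=.
    * by rewrite -e1 hhf.
    * by rewrite -e2 hhf.
  + case=> e1 e2; have := hhf a (ltn_ord a); have := hhf b (ltn_ord b); rewrite e1 e2; lia.
-   apply: (invn_pair' (pr := (Ordinal hq, Ordinal hp))) => /=.
  + rewrite fp fq hpq /=; lia.
  + rewrite fp fq sw_i ?sw_im1 ?hpq /=; [apply/negbTE; lia|lia].
  move=> [a b] /= ne; case: ltnP => //= hab.
  apply: offp => //.
  + case=> e1 e2; have := hhf a (ltn_ord a); have := hhf b (ltn_ord b); rewrite e1 e2; lia.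
  + case=> e1 e2; apply/negP: ne; rewrite negbK; apply/eqP; congr pair; apply: val_inj => /=.
    * by rewrite -e1 hhf.
    * by rewrite -e2 hhf.
- have := f_equal f hpq; rewrite fp fq; lia.
Qed.

Lemma sw_lt N i x : 0 < i < N -> (sw i x < N) = (x < N).
Proof. move=> h; rewrite /sw; repeat case: eqP; move=> *; apply/idP/idP; lia. Qed.

Lemma sw_inv i x : 0 < i -> sw i (sw i x) = x.
Proof. move=> h; rewrite /sw; repeat case: eqP; lia. Qed.

Lemma wf_cat u v x : word_fun (u ++ v) x = word_fun u (word_fun v x).
Proof. by elim: u => //= i u ->. Qed.

Lemma wf_lt N w x : valid_word N w -> x < N -> word_fun w x < N.
Proof.
elim: w => //= i w IH /andP [hi hw] hx; rewrite sw_lt //; exact: IH.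
Qed.

Lemma valid_rev N w : valid_word N w -> valid_word N (rev w).
Proof. by rewrite /valid_word all_rev. Qed.

Lemma wf_rev N w x : valid_word N w -> word_fun (rev w) (word_fun w x) = x.
Proof.
elim: w x => //= i w IH x /andP [/andP [hi0 hi] hw].
by rewrite rev_cons -cats1 wf_cat /= sw_inv // IH.
Qed.

Lemma wf_bij N w : valid_word N w -> bij N (word_fun w) (word_fun (rev w)).
Proof.
move=> hw; rewrite /bij; split => x hx.
- exact: (wf_lt hw hx).
- exact: (wf_lt (valid_rev hw) hx).
- exact: (wf_rev x hw).
- by have := wf_rev x (valid_rev hw); rewrite revK.
Qed.

Lemma wf_le N w : valid_word N w -> invn N (word_fun w) <= size w.
Proof.
elim: w => [|i w IH] /=; first by rewrite invn_id.
move=> /andP [hi hw].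
have := step (wf_bij hw) hi; have := IH hw; lia.
Qed.

Lemma SM_sw N f h i x : bij N f h -> 0 < i < N -> h i.-1 < h i -> x < N ->
  SM N (fun y => sw i (f y)) x = g i (SM N f x).
Proof.
case=> hf hh hhf hfh hi hpq hx.
have hp : h i.-1 < N by apply: hh; lia.
have hq : h i < N by apply: hh; lia.
have fp : f (h i.-1) = i.-1 by apply: hfh; lia.
have fq : f (h i) = i by apply: hfh; lia.
have [k0 [hk0 e0]] := SM_att f hx.
have lb : forall k, x <= k < N -> SM N f x <= f k by move=> k hk; apply: SM_le.
set m := SM N f x in e0 lb *.
case: (eqVneq m i) => hm.
- rewrite /g hm eqxx.
  apply: (SM_char (k0 := h i)).
  + have ek0 : h i = k0 by rewrite -hm e0; apply: hhf; lia.
    lia.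
  + by rewrite fq sw_i //; lia.
  + move=> k hk; have := lb k hk; rewrite hm /sw.
    case: eqP => [e|_]; first by have := hhf k ltac:(lia); rewrite e; lia.
    case: eqP; lia.
- rewrite /g ifN //.
  case: (eqVneq m i.-1) => hm1.
  + have ek0 : h i.-1 = k0 by rewrite -hm1 e0; apply: hhf; lia.
    apply: (SM_char (k0 := h i)); [lia| by rewrite fq sw_i //; lia|].
    move=> k hk; have := lb k hk; rewrite /sw; repeat case: eqP; lia.
  + apply: (SM_char (k0 := k0)); [lia| by rewrite /sw -e0 ifN ?ifN //; apply/eqP; lia|].
    move=> k hk; have := lb k hk; rewrite /sw; repeat case: eqP; lia.
Qed.

Lemma LemA N rw : valid_word N rw -> size rw = invn N (word_fun rw) ->
  forall x, x < N -> ev rw x = SM N (word_fun rw) x.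
Proof.
elim: rw => [|i r IH] /=.
- move=> _ _ x hx; apply/esym; apply: (SM_char (k0 := x)) => //; lia.
- move=> /andP [hi hr] hs x hx.
  have := step (wf_bij hr) hi; have := wf_le hr; move=> h1 h2.
  have hpq : word_fun (rev r) i.-1 < word_fun (rev r) i by lia.
  rewrite (SM_sw (wf_bij hr)) // IH //; lia.
Qed.

Definition cc N (f : nat -> nat) x := N.-1 - f (N.-1 - x).

Lemma sw_cc N i y : 0 < i < N -> y < N -> sw (N - i) (N.-1 - y) = N.-1 - sw i y.
Proof. move=> hi hy; rewrite /sw; repeat case: eqP; lia. Qed.

Lemma wf_Psi N w x : valid_word N w -> x < N ->
  word_fun (Psi_word N w) x = cc N (word_fun w) x.
Proof.
elim: w => //= [|i w IH /andP [hi hw]] hx; first by rewrite /cc; lia.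
rewrite IH // /cc sw_cc //; apply: wf_lt => //; lia.
Qed.

Lemma valid_Psi N w : valid_word N w -> valid_word N (Psi_word N w).
Proof.
rewrite /valid_word /Psi_word all_map => /allP h; apply/allP => i /h /=; lia.
Qed.

Lemma invn_cc N f : (forall x, x < N -> f x < N) -> invn N (cc N f) = invn N f.
Proof.
move=> hf.
pose phi := fun ab : 'I_N * 'I_N => (rev_ord ab.2, rev_ord ab.1).
have phiK : involutive phi by move=> [a b]; rewrite /phi /= !rev_ordK.
rewrite /invn -(card_preimset _ (inv_inj phiK)); apply: eq_card => [[a b]].
rewrite !inE /= /cc.
have ha := ltn_ord a; have hb := ltn_ord b.
have -> : N.-1 - (N - b.+1) = b by lia.
have -> : N.-1 - (N - a.+1) = a by lia.
have := hf b hb; have := hf a ha.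
move=> h1 h2; apply/idP/idP; lia.
Qed.

Definition pf N (p : 'S_N) (x : nat) : nat := if insub x is Some i then val (p i) else x.

Lemma pf_ord N (p : 'S_N) (i : 'I_N) : pf p i = val (p i).
Proof. by rewrite /pf valK. Qed.


Lemma pf_ordE N (p : 'S_N) x (hx : x < N) : pf p x = val (p (Ordinal hx)).
Proof. by rewrite -(pf_ord p (Ordinal hx)). Qed.

Lemma pf_bij N (p : 'S_N) : bij N (pf p) (pf (p^-1)%g).
Proof.
rewrite /bij; split => x hx.
- by rewrite (pf_ordE p hx) ltn_ord.
- by rewrite (pf_ordE (p^-1)%g hx) ltn_ord.
- rewrite (pf_ordE p hx) (pf_ord (p^-1)%g (p (Ordinal hx))) permK //.
- rewrite (pf_ordE (p^-1)%g hx) (pf_ord p ((p^-1)%g (Ordinal hx))) permKV //.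
Qed.

Lemma ninv_pf N (p : 'S_N) : ninv p = invn N (pf p).
Proof.
by rewrite /ninv /invn; apply: eq_card => [[a b]]; rewrite !inE /= !pf_ord.
Qed.

Lemma red_wf N rw (p : 'S_N) : reduced_word rw p -> forall x, x < N -> word_fun rw x = pf p x.
Proof. by case=> _ h _ x hx; rewrite (pf_ordE p hx) h. Qed.

Lemma LemA' N rw (p : 'S_N) : reduced_word rw p -> forall x, x < N ->
  ev rw x = SM N (pf p) x /\ ev (Psi_word N rw) x = SM N (cc N (pf p)) x.
Proof.
move=> hr; have e := red_wf hr; case: hr => hv _ hs x hx.
have hs' : size rw = invn N (word_fun rw) by rewrite hs ninv_pf; apply: invn_ext => k hk; rewrite e.
split.
- rewrite (LemA hv hs' hx); exact: SM_ext.
- have hvP := valid_Psi hv.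
  rewrite (LemA hvP _ hx); last first.
    rewrite size_map hs' -(invn_cc (f := word_fun rw)); last by move=> k hk; apply: wf_lt.
    by apply: invn_ext => k hk; rewrite wf_Psi.
  apply: SM_ext => // k hk; rewrite wf_Psi // /cc e //; lia.
Qed.

Lemma desc_step N f h i : bij N f h -> 0 < i < N -> h i < h i.-1 ->
  bij N (fun x => sw i (f x)) (fun y => h (sw i y)) /\
  invn N f = (invn N (fun x => sw i (f x))).+1.
Proof.
move=> hb hi hd; case: (hb) => hf hh hhf hfh.
have hb' : bij N (fun x => sw i (f x)) (fun y => h (sw i y)).
  rewrite /bij; split => x hx.
  - by rewrite sw_lt //; apply: hf.
  - by apply: hh; rewrite sw_lt.
  - by rewrite sw_inv ?hhf //; lia.
  - by rewrite hfh ?sw_inv ?sw_lt //; lia.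
split => //.
have := step hb' hi; rewrite /= sw_i ?sw_im1; last lia.
rewrite (@invn_ext N (fun x => sw i (sw i (f x))) f); last by move=> x _; rewrite sw_inv //; lia.
have -> : (h i.-1 < h i) = false by apply/negbTE; lia.
rewrite hd; lia.
Qed.

Lemma no_desc N f h : bij N f h -> (forall i, 0 < i < N -> h i.-1 < h i) ->
  forall x, x < N -> f x = x.
Proof.
case=> hf hh hhf hfh hd.
have up : forall y, y < N -> y <= h y.
  elim=> [|y IH] hy; first lia.
  have := hd y.+1 ltac:(lia); have := IH ltac:(lia); simpl; lia.
have down : forall k, k < N -> h (N.-1 - k) <= N.-1 - k.
  elim=> [|k IH] hk; first by rewrite subn0; have := hh N.-1 ltac:(lia); lia.
  have := hd (N.-1 - k) ltac:(lia); have := IH ltac:(lia).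
  have -> : (N.-1 - k).-1 = N.-1 - k.+1 by lia.
  lia.
move=> x hx; have := up x hx; have := down (N.-1 - x) ltac:(lia).
have -> : N.-1 - (N.-1 - x) = x by lia.
move=> h1 h2; have ex : h x = x by lia.
by rewrite -{1}ex hfh.
Qed.

Lemma ex_word N n : forall f h, bij N f h -> invn N f = n ->
  exists rw, [/\ valid_word N rw, size rw = n & forall x, x < N -> word_fun rw x = f x].
Proof.
elim: n => [|n IH] f h hb hn.
- case: (boolP (has (fun i => h i < h i.-1) (iota 1 N.-1))) => hd.
  + case/hasP: hd => i; rewrite mem_iota => hi hd.
    have [_ e] := @desc_step N f h i hb ltac:(lia) hd; lia.
  + exists [::]; split => // x hx /=; apply/esym; apply: (no_desc hb) => // i hi.
    have := hasPn hd i; rewrite mem_iota => /(_ ltac:(lia)).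
    case: hb => hf hh hhf hfh.
    have : h i.-1 != h i by apply/eqP => e; have := f_equal f e; rewrite !hfh; lia.
    lia.
- case: (boolP (has (fun i => h i < h i.-1) (iota 1 N.-1))) => hd.
  + case/hasP: hd => i; rewrite mem_iota => hi hd.
    have [hb' e] := @desc_step N f h i hb ltac:(lia) hd.
    have [rw [hv hs hw]] := IH _ _ hb' ltac:(lia).
    exists (i :: rw); split => //=.
    * rewrite hv andbT; lia.
    * by rewrite hs.
    * move=> x hx; rewrite hw // sw_inv //; lia.
  + exfalso.
    have : invn N f = invn N (fun x => x).
      apply: invn_ext; apply: (no_desc hb) => // i hi.
      have := hasPn hd i; rewrite mem_iota => /(_ ltac:(lia)).
      case: hb => hf hh hhf hfh.
      have : h i.-1 != h i by apply/eqP => e; have := f_equal f e; rewrite !hfh; lia.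
      lia.
    rewrite invn_id; lia.
Qed.

Lemma ex_red N (p : 'S_N) : exists rw, reduced_word rw p.
Proof.
have [rw [hv hs hw]] := ex_word (pf_bij p) (erefl _).
exists rw; split => //.
- by move=> x; rewrite hw ?ltn_ord // pf_ord.
- by rewrite hs ninv_pf.
Qed.

Lemma omega_of N (w u : 'S_N) :
  (forall x, x < N -> SM N (pf w) x = SM N (pf u) x) ->
  (forall x, x < N -> SM N (cc N (pf w)) x = SM N (cc N (pf u)) x) -> omega_eq w u.
Proof.
move=> h1 h2 rp rq hp hq.
have hvp : valid_word N rp by case: hp.
have hvq : valid_word N rq by case: hq.
split; apply: faithfulMN.
- exact: hvp.
- exact: hvq.
- move=> x hx; have [a1 _] := LemA' hp hx; have [b1 _] := LemA' hq hx.
  by rewrite a1 b1 h1.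
- exact: valid_Psi.
- exact: valid_Psi.
- move=> x hx; have [_ a1] := LemA' hp hx; have [_ b1] := LemA' hq hx.
  by rewrite a1 b1 h2.
Qed.

Lemma omega_to N (w u : 'S_N) : omega_eq w u ->
  (forall x, x < N -> SM N (pf w) x = SM N (pf u) x) /\
  (forall x, x < N -> SM N (cc N (pf w)) x = SM N (cc N (pf u)) x).
Proof.
move=> ho; have [rp hp] := ex_red w; have [rq hq] := ex_red u.
have [e1 e2] := ho rp rq hp hq.
split => x hx.
- have [a1 _] := LemA' hp hx; have [b1 _] := LemA' hq hx.
  by rewrite -a1 -b1; exact: (MN_ev e1).
- have [_ a1] := LemA' hp hx; have [_ b1] := LemA' hq hx.
  by rewrite -a1 -b1; exact: (MN_ev e2).
Qed.

Definition swp (b c x : nat) := if x == b then c else if x == c then b else x.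

Lemma SM_swap N f b c d x : b < c < d -> d < N -> f c < f b -> f d < f c -> x < N ->
  SM N (fun y => f (swp b c y)) x = SM N f x.
Proof.
move=> hbc hd h1 h2 hx.
have [k0 [hk0 e0]] := SM_att f hx.
have lb : forall k, x <= k < N -> SM N f x <= f k by move=> k hk; apply: SM_le.
set m := SM N f x in e0 lb *.
have nb : k0 != b by apply/eqP => e; subst k0; have := lb c ltac:(lia); lia.
have nc : k0 != c by apply/eqP => e; subst k0; have := lb d ltac:(lia); lia.
apply: (SM_char (k0 := k0)) => //.
- by rewrite /swp (negbTE nb) (negbTE nc).
- move=> k hk; rewrite /swp; case: eqP => [e|_]; first by subst k; apply: lb; lia.
  case: eqP => [e|_]; last by apply: lb.
  by subst k; have := lb c hk; lia.
Qed.

Lemma swp_cc N b c k : b < N -> c < N -> b != c -> k < N ->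
  swp b c (N.-1 - k) = N.-1 - swp (N.-1 - c) (N.-1 - b) k.
Proof. move=> hb hc hbc hk; rewrite /swp; repeat case: eqP; lia. Qed.

Definition meas N (p : 'S_N) := \sum_(k < N) k * val (p k).

Lemma meas_bound N (p : 'S_N) : meas p <= N * (N * N).
Proof.
rewrite /meas; apply: leq_trans (_ : \sum_(k < N) N * N <= _).
  apply: leq_sum => k _; apply: leq_mul; apply: ltnW; exact: ltn_ord.
by rewrite sum_nat_const card_ord.
Qed.

Lemma meas_swap N (p : 'S_N) (b c : 'I_N) : b < c -> p c < p b ->
  meas p < meas (tperm b c * p)%g.
Proof.
move=> hbc hp.
have nbc : c != b by apply/eqP => e; subst; lia.
rewrite /meas (bigD1 b) // (bigD1 c) //= [in X in _ < X](bigD1 b) // [in X in _ < X](bigD1 c) //=.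
rewrite !permM tpermL tpermR.
have -> : \sum_(i < N | (i != b) && (i != c)) i * val ((tperm b c * p)%g i) =
          \sum_(i < N | (i != b) && (i != c)) i * val (p i).
  apply: eq_bigr => i /andP [h1 h2]; rewrite permM tpermD // eq_sym //.
set S := \sum_(i < N | _) _.
have := ltn_ord b; have := ltn_ord c; nia.
Qed.

Definition avoidf N (F : nat -> nat) :=
  forall a b c d, a < b -> b < c -> c < d -> d < N -> ~ [/\ F b < F a, F c < F b & F d < F c].

Lemma avoid_pf N (p : 'S_N) : avoids4321 p -> avoidf N (pf p).
Proof.
move=> /forallP h a b c d hab hbc hcd hd [h1 h2 h3].
have ha : a < N by lia. have hb : b < N by lia. have hc : c < N by lia.
have := h (Ordinal ha); move/forallP/(_ (Ordinal hb))/forallP/(_ (Ordinal hc))/forallP/(_ (Ordinal hd)).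
rewrite /= -!(pf_ordE p) hab hbc hcd h1 h2 h3; by [].
Qed.

Lemma exist_avoid N n (p : 'S_N) : N * (N * N) - meas p <= n ->
  exists u : 'S_N, [/\ avoids4321 u,
    forall x, x < N -> SM N (pf u) x = SM N (pf p) x &
    forall x, x < N -> SM N (cc N (pf u)) x = SM N (cc N (pf p)) x].
Proof.
elim: n p => [|n IH] p hn; (case: (boolP (avoids4321 p)) => hav; first by exists p).
all: move: hav => /forallPn [a /forallPn [b /forallPn [c /forallPn [d]]]].
all: rewrite negbK => /and5P [hab hbc hcd h1 /andP [h2 h3]].
all: have hm := meas_swap hbc h2; have := meas_bound (tperm b c * p)%g.
1: lia.
move=> hB.
have [u [hu e1 e2]] := IH (tperm b c * p)%g ltac:(lia).
exists u; split => // x hx.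
- rewrite e1 //.
  rewrite (@SM_ext N (pf (tperm b c * p)%g) (fun y => pf p (swp b c y))) //; last first.
    move=> k hk; rewrite (pf_ordE _ hk) permM /swp.
    have -> : (k == b) = (Ordinal hk == b) by [].
    have -> : (k == c) = (Ordinal hk == c) by [].
    case: eqP => [e|ne]; first by rewrite e tpermL pf_ord.
    case: eqP => [e|ne2]; first by rewrite e tpermR pf_ord.
    rewrite tpermD ?(pf_ordE p hk) //; apply/eqP => e; [apply: ne|apply: ne2]; rewrite -e //.
  have := ltn_ord d; move=> hdN; apply: (SM_swap (d := d)) => //; rewrite ?pf_ord //; apply/andP; split => //.
- rewrite e2 //.
  rewrite (@SM_ext N (cc N (pf (tperm b c * p)%g))
              (fun y => cc N (pf p) (swp (N.-1 - c) (N.-1 - b) y))) //; last first.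
    move=> k hk; rewrite /cc.
    have hk' : N.-1 - k < N by lia.
    rewrite (pf_ordE _ hk') permM.
    rewrite -swp_cc ?ltn_ord //; last by apply/eqP => e; move: hbc; rewrite e ltnn.
    rewrite /swp.
    have -> : (N.-1 - k == b) = (Ordinal hk' == b) by [].
    have -> : (N.-1 - k == c) = (Ordinal hk' == c) by [].
    case: eqP => [e|ne]; first by rewrite e tpermL pf_ord.
    case: eqP => [e|ne2]; first by rewrite e tpermR pf_ord.
    rewrite tpermD ?(pf_ordE p hk') //; apply/eqP => e; [apply: ne|apply: ne2]; rewrite -e //.
  have ha := ltn_ord a; have hb := ltn_ord b; have hc := ltn_ord c; have hd := ltn_ord d.
  apply: (SM_swap (d := N.-1 - a)) => //; try lia.
  + rewrite /cc; have -> : N.-1 - (N.-1 - b) = b by lia.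
    have -> : N.-1 - (N.-1 - c) = c by lia.
    rewrite !pf_ord; have := ltn_ord (p b); move: h2.
    set vb := val (p b); set vc := val (p c); lia.
  + rewrite /cc; have -> : N.-1 - (N.-1 - b) = b by lia.
    have -> : N.-1 - (N.-1 - a) = a by lia.
    rewrite !pf_ord; have := ltn_ord (p b); have := ltn_ord (p a); move: h1.
    set vb := val (p b); set va := val (p a); lia.
Qed.

Definition RL N f k := (k == N.-1) || (SM N f k < SM N f k.+1).

Definition injN N (f : nat -> nat) := forall a b, a < N -> b < N -> f a = f b -> a = b.

Lemma RL_iff N f k : injN N f -> k < N -> (f k == SM N f k) = RL N f k.
Proof.
move=> hi hk; rewrite /RL.
case: (eqVneq (f k) (SM N f k)) => e.
- case: (eqVneq k N.-1) => //= hkN.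
  have hk1 : k.+1 < N by lia.
  have [k' [hk' e']] := SM_att f hk1.
  have := SM_le (N := N) f (x := k) (k := k') ltac:(lia).
  have : f k' != f k by apply/eqP => ee; have := hi k' k ltac:(lia) hk ee; lia.
  rewrite e' -e; move: (f k') (f k) => u v; lia.
- have [k0 [hk0 e0]] := SM_att f hk.
  have nk : k0 != k by apply/eqP => ee; subst k0; rewrite e0 eqxx in e.
  have hkN : (k == N.-1) = false by apply/negbTE; lia.
  rewrite hkN /=; apply/esym/negbTE; rewrite -leqNgt.
  rewrite e0; apply: SM_le; lia.
Qed.

Lemma bij_inj N f h : bij N f h -> injN N f.
Proof. by case=> _ _ hhf _ a b ha hb e; rewrite -(hhf a ha) e hhf. Qed.

Lemma cc_bij N f h : bij N f h -> bij N (cc N f) (cc N h).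
Proof.
case=> hf hh hhf hfh; rewrite /bij /cc; split => x hx.
- lia.
- lia.
- have h1 : N.-1 - x < N by lia.
  have := hf _ h1; move=> h2.
  have -> : N.-1 - (N.-1 - f (N.-1 - x)) = f (N.-1 - x) by lia.
  rewrite hhf //; lia.
- have h1 : N.-1 - x < N by lia.
  have := hh _ h1; move=> h2.
  have -> : N.-1 - (N.-1 - h (N.-1 - x)) = h (N.-1 - x) by lia.
  rewrite hfh //; lia.
Qed.

Lemma agree_aux N F Fi G Gi (M : nat -> bool) k :
  bij N F Fi -> bij N G Gi ->
  (forall j, j < N -> ~~ M j -> F j = G j) ->
  (forall j1 j2, j1 < j2 -> j2 < N -> M j1 -> M j2 -> G j1 < G j2) ->
  (forall j, j < k -> F j = G j) -> k < N -> F k < G k -> False.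
Proof.
move=> hbF [hG hGi hGiG hGGi] ag inc hmin hk hlt.
have injF := bij_inj hbF.
have Mk : M k by apply/negPn/negP => nm; have := ag k hk nm; lia.
case: hbF => hF _ _ _.
set k2 := Gi (F k).
have hk2 : k2 < N by apply: hGi; apply: hF.
have e2 : G k2 = F k by apply: hGGi; apply: hF.
case: (boolP (M k2)) => M2.
- case: (ltngtP k2 k) => c.
  + have := hmin k2 c; rewrite e2 => ee; have := injF _ _ hk2 hk ee; lia.
  + have := inc k k2 c hk2 Mk M2; lia.
  + by move: hlt; rewrite -e2 c ltnn.
- have := ag k2 hk2 M2; rewrite e2 => ee; have := injF _ _ hk2 hk ee.
  by move=> c; move: hlt; rewrite -e2 c ltnn.
Qed.

Lemma inc_mid N F Fi k1 k2 : bij N F Fi -> avoidf N F -> k1 < k2 -> k2 < N ->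
  F k1 != SM N F k1 -> cc N F (N.-1 - k1) != SM N (cc N F) (N.-1 - k1) ->
  F k2 != SM N F k2 -> F k1 < F k2.
Proof.
move=> hb hav h12 hk2 m1 m1' m2.
have [hF _ _ _] := hb.
have injF := bij_inj hb.
rewrite ltnNge leq_eqVlt negb_or; apply/andP; split.
  by apply/eqP => ee; have := injF k2 k1 hk2 ltac:(lia) ee; lia.
apply/negP => hlt.
have [d [hd ed]] := SM_att F hk2.
have nd : d != k2 by apply/eqP => ee; subst d; rewrite ed eqxx in m2.
have hFd : F d < F k2.
  have := SM_le (N := N) F (x := k2) (k := k2) ltac:(lia); rewrite ed.
  have : F d != F k2 by apply/eqP => ee; have := injF d k2 ltac:(lia) hk2 ee; lia.
  move: (F d) (F k2) => u v; lia.
have hk1' : N.-1 - k1 < N by lia.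
have [e [he ee]] := SM_att (cc N F) hk1'.
have ne : e != N.-1 - k1 by apply/eqP => eq; subst e; rewrite ee eqxx in m1'.
have hFe : cc N F e < cc N F (N.-1 - k1).
  have := SM_le (N := N) (cc N F) (x := N.-1 - k1) (k := N.-1 - k1) ltac:(lia); rewrite ee.
  have := bij_inj (cc_bij hb).
  move=> ic; have : cc N F e != cc N F (N.-1 - k1).
    by apply/eqP => eq; have := ic e (N.-1 - k1) ltac:(lia) hk1' eq; lia.
  move: (cc N F e) (cc N F (N.-1 - k1)) => u v; lia.
move: hFe; rewrite /cc.
have -> : N.-1 - (N.-1 - k1) = k1 by lia.
have := hF (N.-1 - e) ltac:(lia); have := hF k1 ltac:(lia) => h1 h2 h3.
have hFa : F k1 < F (N.-1 - e) by lia.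
apply: (hav (N.-1 - e) k1 k2 d); try lia.
split => //.
Qed.

Lemma uniq_fun N F Fi G Gi : bij N F Fi -> bij N G Gi ->
  (forall x, x < N -> SM N F x = SM N G x) ->
  (forall x, x < N -> SM N (cc N F) x = SM N (cc N G) x) ->
  avoidf N F -> avoidf N G -> forall x, x < N -> F x = G x.
Proof.
move=> hbF hbG e1 e2 avF avG.
pose M (H : nat -> nat) k := (H k != SM N H k) && (cc N H (N.-1 - k) != SM N (cc N H) (N.-1 - k)).
have injF := bij_inj hbF; have injG := bij_inj hbG.
have injcF := bij_inj (cc_bij hbF); have injcG := bij_inj (cc_bij hbG).
have RLe : forall H H', (forall x, x < N -> SM N H x = SM N H' x) -> forall k, k < N -> RL N H k = RL N H' k.
  move=> H H' e k hk; rewrite /RL; case: (eqVneq k N.-1) => //= hkN.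
  by rewrite !e //; lia.
have eqRL : forall k, k < N -> (F k == SM N F k) = (G k == SM N G k).
  by move=> k hk; rewrite !RL_iff //; apply: RLe.
have eqLR : forall k, k < N -> (cc N F k == SM N (cc N F) k) = (cc N G k == SM N (cc N G) k).
  by move=> k hk; rewrite !RL_iff //; apply: RLe.
have eM : forall k, k < N -> M F k = M G k.
  move=> k hk; rewrite /M eqRL // eqLR //; lia.
have ag : forall j, j < N -> ~~ M F j -> F j = G j.
  move=> j hj; rewrite /M negb_and !negbK; case/orP => hh.
  - have := hh; rewrite eqRL // => hh'.
    by rewrite (eqP hh) (eqP hh') e1.
  - have hj' : N.-1 - j < N by lia.
    have := hh; rewrite eqLR // => hh'.
    move: (eqP hh) (eqP hh'); rewrite e2 // => a b; move: a; rewrite -b /cc.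
    have -> : N.-1 - (N.-1 - j) = j by lia.
    case: hbF => hF _ _ _; case: hbG => hG _ _ _.
    have := hF j hj; have := hG j hj; lia.
have ag' : forall j, j < N -> ~~ M G j -> G j = F j.
  by move=> j hj; rewrite -eM // => h; rewrite ag.
have incF : forall j1 j2, j1 < j2 -> j2 < N -> M F j1 -> M F j2 -> F j1 < F j2.
  move=> j1 j2 h12 h2 /andP [a b] /andP [c _]; exact: (inc_mid hbF).
have incG : forall j1 j2, j1 < j2 -> j2 < N -> M F j1 -> M F j2 -> G j1 < G j2.
  move=> j1 j2 h12 h2; rewrite !eM; try lia.
  move=> /andP [a b] /andP [c _]; exact: (inc_mid hbG).
have incG' : forall j1 j2, j1 < j2 -> j2 < N -> M G j1 -> M G j2 -> F j1 < F j2.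
  move=> j1 j2 h12 h2; rewrite -!eM; try lia. exact: incF.
elim/ltn_ind => k IH hk.
case: (ltngtP (F k) (G k)) => // c.
- exfalso; apply: (agree_aux hbF hbG ag incG (k := k)) => // j hj; apply: IH => //; lia.
- exfalso; apply: (agree_aux hbG hbF ag' incG' (k := k)) => // j hj.
  by rewrite IH //; lia.
Qed.

Unset Implicit Arguments.

Theorem mainTheorem3 (N : nat) (hN : 1 <= N) (w : 'S_N) :
  exists u : 'S_N,
    (avoids4321 u /\ omega_eq w u) /\
    (forall v : 'S_N, avoids4321 v -> omega_eq w v -> v = u).
Proof.
have [u [hu e1 e2]] := @exist_avoid N (N * (N * N) - meas w) w (leqnn _).
exists u; split.
- split => //; apply: omega_of => x hx; by rewrite ?e1 ?e2.
- move=> v hv ho; have [f1 f2] := omega_to ho.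
  apply/permP => i; apply: val_inj; rewrite -!pf_ord.
  apply: (uniq_fun (pf_bij v) (pf_bij u)) => //.
  + by move=> x hx; rewrite e1 // f1.
  + by move=> x hx; rewrite e2 // f2.
  + exact: avoid_pf.
  + exact: avoid_pf.
Qed.
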